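(* Let $a, b$ be positive integers and let $T_{a,b} = \{C_{i,1} : 1 \le i \le 2a+1\} \cup \{C_{a+1,j} : 2 \le j \le b+1\}$, of size $n = 2a+b+1$. Then on the $n \times n$ board, $2 \le \mathrm{cp}_{\mathrm{free}}(T_{a,b}) \le 4$.
   Context: For integers $i,j$, $C_{i,j}$ denotes the unit square cell in column $i$ and row $j$ of the integer grid (columns numbered left to right, rows numbered top to bottom). A polyomino is a finite set of cells; its size is its number of cells. For a polyomino $\mathcal{P}$ of size $n$ the board is $\mathbb{B} = \{C_{i,j} : 1 \le i,j \le n\}$. The shift of $\mathcal{P}$ by integers $(c,d)$ is $\mathcal{P}+(c,d) = \{C_{x+c,y+d} : C_{x,y} \in \mathcal{P}\}$. The rotations of $T_{a,b}$ by $90^\circ,180^\circ,270^\circ$ clockwise are $TR_{a,b} = \{C_{b+1,i} : 1 \le i \le 2a+1\} \cup \{C_{j,a+1} : 1 \le j \le b\}$, $TR^2_{a,b} = \{C_{i,b+1} : 1 \le i \le 2a+1\} \cup \{C_{a+1,j} : 1 \le j \le b\}$, $TR^3_{a,b} = \{C_{1,i} : 1 \le i \le 2a+1\} \cup \{C_{j,a+1} : 2 \le j \le b+1\}$. A free copy of $T_{a,b}$ is any shift of one of these four. A set of polyominoes is a valid arrangement if each is contained in $\mathbb{B}$ and they are pairwise disjoint. A free packing of $\mathcal{P}$ is a set of free copies of $\mathcal{P}$ forming a valid arrangement such that adding any further free copy of $\mathcal{P}$ yields an invalid arrangement. The clumsy free packing number $\mathrm{cp}_{\mathrm{free}}(\mathcal{P})$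 is the minimum number of polyominoes in a free packing of $\mathcal{P}$ on the $n \times n$ board. *)

(* Defs.v *)
From HB Require Import structures.
From mathcomp Require Import all_boot all_order all_algebra.
From mathcomp Require Import finmap.
Set Implicit Arguments. Unset Strict Implicit. Unset Printing Implicit Defensive.
Import Order.TTheory GRing.Theory Num.Theory.
Local Open Scope fset_scope.
Local Open Scope ring_scope.

(* A cell C_{i,j} (column i, row j) is the pair (i, j) of integers. *)
Definition cell := (int * int)%type.
Definition polyomino := {fset cell}.

Definition mkcells (s : seq cell) : polyomino := [fset x | x in s].

Definition T_ab (a b : nat) : polyomino :=
  mkcells ([seq ((i%:Z), 1%:Z) | i <- iota 1 (2*a+1)] ++
           [seq (((a+1)%N)%:Z, (j%:Z)) | j <- iota 2 b]).
Definition TR_ab (a b : nat) : polyomino :=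
  mkcells ([seq (((b+1)%N)%:Z, (i%:Z)) | i <- iota 1 (2*a+1)] ++
           [seq ((j%:Z), ((a+1)%N)%:Z) | j <- iota 1 b]).
Definition TR2_ab (a b : nat) : polyomino :=
  mkcells ([seq ((i%:Z), ((b+1)%N)%:Z) | i <- iota 1 (2*a+1)] ++
           [seq (((a+1)%N)%:Z, (j%:Z)) | j <- iota 1 b]).
Definition TR3_ab (a b : nat) : polyomino :=
  mkcells ([seq (1%:Z, (i%:Z)) | i <- iota 1 (2*a+1)] ++
           [seq ((j%:Z), ((a+1)%N)%:Z) | j <- iota 2 b]).

Definition shift (P : polyomino) (c d : int) : polyomino :=
  [fset (x.1 + c, x.2 + d) | x in P].

Definition free_copy_T (a b : nat) (Q : polyomino) : Prop :=
  exists (R : polyomino) (c d : int),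
    R \in [:: T_ab a b; TR_ab a b; TR2_ab a b; TR3_ab a b] /\ Q = shift R c d.

Definition board (n : nat) : polyomino :=
  mkcells [seq ((i%:Z), (j%:Z)) | i <- iota 1 n, j <- iota 1 n].

Definition valid_arrangement (n : nat) (S : {fset polyomino}) : Prop :=
  (forall Q, Q \in S -> Q `<=` board n) /\
  (forall Q Q', Q \in S -> Q' \in S -> Q != Q' -> [disjoint Q & Q']).

Definition free_packing_T (a b : nat) (S : {fset polyomino}) : Prop :=
  let n := #|` T_ab a b| in
  (forall Q, Q \in S -> free_copy_T a b Q) /\
  valid_arrangement n S /\
  (forall Q, free_copy_T a b Q -> Q \notin S -> ~ valid_arrangement n (Q |` S)).

Definition is_cp_free_T (a b k : nat) : Prop :=
  (exists S, free_packing_T a b S /\ #|` S| = k) /\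
  (forall S, free_packing_T a b S -> (k <= #|` S|)%N).

(* Main.v *)
Require Import Defs.
From HB Require Import structures.
From mathcomp Require Import all_boot all_order all_algebra.
From mathcomp Require Import finmap zify.
From Stdlib Require Import Classical.
Set Implicit Arguments. Unset Strict Implicit. Unset Printing Implicit Defensive.
Import Order.TTheory GRing.Theory Num.Theory.
Local Open Scope fset_scope.
Local Open Scope ring_scope.

Lemma mem_mkcells (s : seq cell) p : (p \in mkcells s) = (p \in s).
Proof. by rewrite /mkcells inE. Qed.

Lemma mem_iotaZ (x : int) lo len :
  (x \in [seq Posz i | i <- iota lo len]) = ((Posz lo <= x) && (x < Posz (lo + len))).
Proof.
case: x => [n|n].
- rewrite (mem_map (fun a b (h : Posz a = Posz b) => ltac:(by case: h))) mem_iota.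
  by rewrite !lez_nat ltz_nat.
- have -> : (Posz lo <= Negz n) = false by lia.
  by apply/mapP => -[i _ //].
Qed.

Lemma mem_rowl (s : seq nat) (K x y : int) :
  ((x, y) \in [seq (Posz i, K) | i <- s]) = ((y == K) && (x \in [seq Posz i | i <- s])).
Proof.
elim: s => [|i s IH]; first by rewrite andbF.
rewrite /= !inE IH.
by rewrite xpair_eqE; case: (y == K); rewrite ?andbF ?andbT.
Qed.

Lemma mem_coll (s : seq nat) (K x y : int) :
  ((x, y) \in [seq (K, Posz i) | i <- s]) = ((x == K) && (y \in [seq Posz i | i <- s])).
Proof.
elim: s => [|i s IH]; first by rewrite andbF.
rewrite /= !inE IH.
by rewrite xpair_eqE; case: (x == K); rewrite ?andbF ?andbT.
Qed.

Lemma in_shift (R : polyomino) c d (p : cell) :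
  (p \in shift R c d) = ((p.1 - c, p.2 - d) \in R).
Proof.
apply/imfsetP/idP => [[q qR ->] /=|h]; first by rewrite !addrK; case: q qR.
by exists (p.1 - c, p.2 - d) => //=; rewrite !subrK; case: p {h}.
Qed.

Lemma in_board n (x y : int) :
  ((x, y) \in board n) = [&& 1 <= x, x <= Posz n, 1 <= y & y <= Posz n].
Proof.
rewrite /board mem_mkcells; apply/allpairsP/idP => [[[i j] /= [hi hj [-> ->]]]|h].
  move: hi hj; rewrite !mem_iota; lia.
have [i hi] : exists i : nat, x = Posz i by case: x h => [i|i] h; [exists i | lia].
have [j hj] : exists j : nat, y = Posz j by case: y h => [j|j] h; [exists j | lia].
exists (i, j) => /=; rewrite !mem_iota; split => //; [lia|lia|by subst].
Qed.

Definition memk (k : nat) (A B c d x y : int) : Prop :=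
  match k with
  | 0%N => (y - d = 1 /\ 1 <= x - c /\ x - c <= 2*A+1) \/ (x - c = A+1 /\ 2 <= y - d /\ y - d <= B+1)
  | 1%N => (x - c = B+1 /\ 1 <= y - d /\ y - d <= 2*A+1) \/ (y - d = A+1 /\ 1 <= x - c /\ x - c <= B)
  | 2%N => (y - d = B+1 /\ 1 <= x - c /\ x - c <= 2*A+1) \/ (x - c = A+1 /\ 1 <= y - d /\ y - d <= B)
  | _ => (x - c = 1 /\ 1 <= y - d /\ y - d <= 2*A+1) \/ (y - d = A+1 /\ 2 <= x - c /\ x - c <= B+1)
  end.

Definition shape (k a b : nat) : polyomino :=
  match k with 0%N => T_ab a b | 1%N => TR_ab a b | 2%N => TR2_ab a b | _ => TR3_ab a b end.

Lemma in_shape k a b x y : ((x, y) \in shape k a b) <-> memk k (Posz a) (Posz b) 0 0 x y.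
Proof.
rewrite /memk !subr0.
case: k => [|[|[|k]]] /=; rewrite /T_ab /TR_ab /TR2_ab /TR3_ab mem_mkcells mem_cat
  ?mem_rowl ?mem_coll !mem_iotaZ; split => h; lia.
Qed.

Lemma in_copy k a b c d x y :
  ((x, y) \in shift (shape k a b) c d) <-> memk k (Posz a) (Posz b) c d x y.
Proof.
rewrite in_shift /= in_shape.
by case: k => [|[|[|k]]] /=; rewrite !subr0.
Qed.

Lemma card_T a b : #|` T_ab a b| = (2 * a + b + 1)%N.
Proof.
rewrite /T_ab /mkcells card_fseq undup_id.
  by rewrite size_cat !size_map !size_iota; lia.
rewrite cat_uniq; apply/and3P; split.
- by rewrite map_inj_uniq ?iota_uniq // => i j [] /eqP; lia.
- apply/hasPn => -[x y] /mapP [j hj [-> ->]].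
  rewrite mem_rowl; apply/negP => /andP [/eqP h _]; move: hj; rewrite mem_iota; lia.
- by rewrite map_inj_uniq ?iota_uniq // => i j [] /eqP; lia.
Qed.

Definition bnd (k : nat) (A B c d : int) : Prop :=
  if odd k then (0 <= c /\ c <= 2 * A /\ 0 <= d /\ d <= B)
  else (0 <= c /\ c <= B /\ 0 <= d /\ d <= 2 * A).

Definition copy (k a b : nat) (c d : int) : polyomino := shift (shape k a b) c d.

Lemma in_copyE k a b c d x y :
  ((x, y) \in copy k a b c d) <-> memk k (Posz a) (Posz b) c d x y.
Proof. exact: in_copy. Qed.

Lemma free_copyE a b Q : free_copy_T a b Q -> exists k c d, (k < 4)%N /\ Q = copy k a b c d.
Proof.
move=> [R [c [d [hR ->]]]]; move: hR; rewrite !inE.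
case/or4P => /eqP ->; [exists 0%N|exists 1%N|exists 2%N|exists 3%N]; by exists c, d.
Qed.

Lemma copy_free a b k c d : (k < 4)%N -> free_copy_T a b (copy k a b c d).
Proof.
move=> hk; exists (shape k a b), c, d; split => //.
by case: k hk => [|[|[|[|k]]]] //= _; rewrite !inE eqxx ?orbT.
Qed.

Lemma memk_some k A B c d : 0 <= A -> 0 <= B -> exists x y, memk k A B c d x y.
Proof.
move=> hA hB; case: k => [|[|[|k]]].
- by exists (c + 1), (d + 1); rewrite /memk /=; lia.
- by exists (c + B + 1), (d + 1); rewrite /memk /=; lia.
- by exists (c + 1), (d + B + 1); rewrite /memk /=; lia.
- by exists (c + 1), (d + 1); rewrite /memk /=; lia.
Qed.

Lemma sub_board_bnd a b k c d : (k < 4)%N ->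
  copy k a b c d `<=` board #|` T_ab a b| -> bnd k (Posz a) (Posz b) c d.
Proof.
rewrite card_T => hk /fsubsetP hs.
have H : forall x y, memk k (Posz a) (Posz b) c d x y ->
   [&& 1 <= x, x <= Posz (2 * a + b + 1), 1 <= y & y <= Posz (2 * a + b + 1)].
  by move=> x y /in_copyE h; rewrite -in_board; apply: hs.
clear hs; rewrite /bnd; case: k hk H => [|[|[|[|k]]]] // _ H /=.
- have := H (c + 1) (d + 1); have := H (c + 2 * Posz a + 1) (d + 1);
  have := H (c + Posz a + 1) (d + Posz b + 1); rewrite /memk /=; lia.
- have := H (c + Posz b + 1) (d + 1); have := H (c + Posz b + 1) (d + 2 * Posz a + 1);
  have := H (c + 1) (d + Posz a + 1); rewrite /memk /=; lia.
- have := H (c + 1) (d + Posz b + 1); have := H (c + 2 * Posz a + 1) (d + Posz b + 1);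
  have := H (c + Posz a + 1) (d + 1); rewrite /memk /=; lia.
- have := H (c + 1) (d + 1); have := H (c + 1) (d + 2 * Posz a + 1);
  have := H (c + Posz b + 1) (d + Posz a + 1); rewrite /memk /=; lia.
Qed.

Lemma bnd_sub_board a b k c d : (k < 4)%N -> bnd k (Posz a) (Posz b) c d ->
  copy k a b c d `<=` board #|` T_ab a b|.
Proof.
rewrite card_T => hk hb; apply/fsubsetP => -[x y] /in_copyE h.
rewrite in_board; move: hb h; rewrite /bnd /memk.
case: k hk => [|[|[|[|k]]]] //= _; lia.
Qed.

Lemma mem_fseqE (T : choiceType) (s : seq T) x : (x \in [fset y in s]) = (x \in s).
Proof. by rewrite inE. Qed.

Definition disjk (A B : int) k c d k' c' d' :=
  forall x y, memk k A B c d x y -> memk k' A B c' d' x y -> False.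

Lemma disjk_sym A B k c d k' c' d' : disjk A B k c d k' c' d' -> disjk A B k' c' d' k c d.
Proof. by move=> h x y h1 h2; exact: (h x y h2 h1). Qed.

Lemma disj_copy a b k c d k' c' d' : disjk (Posz a) (Posz b) k c d k' c' d' ->
  [disjoint copy k a b c d & copy k' a b c' d'].
Proof.
move=> h; apply/fdisjointP => -[x y] /in_copyE h1; apply/negP => /in_copyE h2.
exact: (h x y h1 h2).
Qed.

Lemma packing_of a b k1 c1 d1 k2 c2 d2 k3 c3 d3 k4 c4 d4 :
  (k1 < 4)%N -> (k2 < 4)%N -> (k3 < 4)%N -> (k4 < 4)%N ->
  bnd k1 (Posz a) (Posz b) c1 d1 -> bnd k2 (Posz a) (Posz b) c2 d2 -> bnd k3 (Posz a) (Posz b) c3 d3 -> bnd k4 (Posz a) (Posz b) c4 d4 ->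
  disjk (Posz a) (Posz b) k1 c1 d1 k2 c2 d2 -> disjk (Posz a) (Posz b) k1 c1 d1 k3 c3 d3 -> disjk (Posz a) (Posz b) k1 c1 d1 k4 c4 d4 ->
  disjk (Posz a) (Posz b) k2 c2 d2 k3 c3 d3 -> disjk (Posz a) (Posz b) k2 c2 d2 k4 c4 d4 -> disjk (Posz a) (Posz b) k3 c3 d3 k4 c4 d4 ->
  (forall k c d, (k < 4)%N -> bnd k (Posz a) (Posz b) c d -> exists x y, memk k (Posz a) (Posz b) c d x y /\
     (memk k1 (Posz a) (Posz b) c1 d1 x y \/ memk k2 (Posz a) (Posz b) c2 d2 x y \/ memk k3 (Posz a) (Posz b) c3 d3 x y \/ memk k4 (Posz a) (Posz b) c4 d4 x y)) ->
  exists S, free_packing_T a b S /\ (#|` S| <= 4)%N.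
Proof.
move=> hk1 hk2 hk3 hk4 hb1 hb2 hb3 hb4 d12 d13 d14 d23 d24 d34 hit.
pose P1 := copy k1 a b c1 d1; pose P2 := copy k2 a b c2 d2;
pose P3 := copy k3 a b c3 d3; pose P4 := copy k4 a b c4 d4.
exists [fset x in [:: P1; P2; P3; P4]]; split; last first.
  by rewrite card_fseq; apply: leq_trans (size_undup _) _.
have memS : forall Q, Q \in [fset x in [:: P1; P2; P3; P4]] ->
    [\/ Q = P1, Q = P2, Q = P3 | Q = P4].
  by move=> Q; rewrite !inE orbF => /or4P [] /eqP ->; [apply: Or41|apply: Or42|apply: Or43|apply: Or44].
have subS : forall Q, Q \in [fset x in [:: P1; P2; P3; P4]] -> Q `<=` board #|` T_ab a b|.
  by move=> Q /memS [] ->; apply: bnd_sub_board.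
have disjS : forall Q Q', Q \in [fset x in [:: P1; P2; P3; P4]] ->
    Q' \in [fset x in [:: P1; P2; P3; P4]] -> Q != Q' -> [disjoint Q & Q'].
{ move=> Q Q' /memS hQ /memS hQ' hne.
  case: hQ => ?; case: hQ' => ?; subst Q Q'; try by rewrite eqxx in hne.
  all: rewrite /P1 /P2 /P3 /P4; apply: disj_copy; first [assumption | apply: disjk_sym; assumption]. }
split; [|split; [by split|]].
- by move=> Q /memS [] ->; apply: copy_free.
- move=> Q /free_copyE [k [c [d [hk ->]]]] hnot [hsub hdis].
  have hb := sub_board_bnd hk (hsub _ (fset1U1 _ _)).
  have [x [y [hx hP]]] := hit k c d hk hb.
  have key : forall P, P \in [fset x in [:: P1; P2; P3; P4]] -> (x, y) \in P -> False.
    move=> P hP' hxy.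
    have hne : copy k a b c d != P.
      by apply/eqP => heq; move: hnot; rewrite heq hP'.
    have := hdis _ _ (fset1U1 _ _) (fset1Ur _ hP') hne.
    move/fdisjointP => /(_ (x, y)); rewrite (in_copyE k a b c d x y).2 // => /(_ isT).
    by rewrite hxy.
  have inP : forall i, i \in [:: P1; P2; P3; P4] -> i \in [fset x in [:: P1; P2; P3; P4]].
    by move=> i hi; rewrite mem_fseqE.
  case: hP => [h|[h|[h|h]]].
  + by apply: (key P1); [apply: inP; rewrite !inE eqxx | rewrite /P1 /P2 /P3 /P4; apply/in_copyE].
  + by apply: (key P2); [apply: inP; rewrite !inE eqxx ?orbT | rewrite /P1 /P2 /P3 /P4; apply/in_copyE].
  + by apply: (key P3); [apply: inP; rewrite !inE eqxx ?orbT | rewrite /P1 /P2 /P3 /P4; apply/in_copyE].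
  + by apply: (key P4); [apply: inP; rewrite !inE eqxx ?orbT | rewrite /P1 /P2 /P3 /P4; apply/in_copyE].
Qed.

Ltac finw := split; [done | split; [rewrite /bnd /=; lia | move=> x y; rewrite /memk /=; lia]].

Lemma lb_wit A B k c d : 1 <= A -> 1 <= B -> (k < 4)%N -> bnd k A B c d ->
  exists k' c' d', (k' < 4)%N /\ bnd k' A B c' d' /\ disjk A B k' c' d' k c d.
Proof.
move=> hA hB; case: k => [|[|[|[|k]]]] // _; rewrite /bnd /= => hb.
- have [h|h] : d <= 2 * A - 1 \/ d = 2 * A by lia.
  + have [h'|h'] : c = 0 \/ c <> 0 by lia.
    * by exists 2%N, 1, (2 * A); finw.
    * by exists 2%N, 0, (2 * A); finw.
  + have [h'|h'] : c = 0 \/ c <> 0 by lia.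
    * by exists 1%N, (2 * A), 0; finw.
    * by exists 3%N, 0, 0; finw.
- have [h|h] : c >= 1 \/ c = 0 by lia.
  + have [h'|h'] : d = 0 \/ d <> 0 by lia.
    * by exists 3%N, 0, 1; finw.
    * by exists 3%N, 0, 0; finw.
  + have [h'|h'] : d = 0 \/ d >= 1 by lia.
    * by exists 2%N, B, (2 * A); finw.
    * by exists 0%N, B, 0; finw.
- have [h|h] : d >= 1 \/ d = 0 by lia.
  + have [h'|h'] : c = 0 \/ c <> 0 by lia.
    * by exists 0%N, 1, 0; finw.
    * by exists 0%N, 0, 0; finw.
  + have [h'|h'] : c = 0 \/ c >= 1 by lia.
    * by exists 1%N, (2 * A), B; finw.
    * by exists 3%N, 0, B; finw.
- have [h|h] : c <= 2 * A - 1 \/ c = 2 * A by lia.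
  + have [h'|h'] : d = 0 \/ d <> 0 by lia.
    * by exists 1%N, (2 * A), 1; finw.
    * by exists 1%N, (2 * A), 0; finw.
  + have [h'|h'] : d = 0 \/ d >= 1 by lia.
    * by exists 2%N, 0, (2 * A); finw.
    * by exists 0%N, 0, 0; finw.
Qed.

Lemma lower a b S : (0 < a)%N -> (0 < b)%N -> free_packing_T a b S -> (2 <= #|` S|)%N.
Proof.
move=> ha hb [hfree [[hsub hdis] hmax]].
case E: #|` S| => [|[|m]] //; exfalso.
- have ES : S = fset0 by apply: cardfs0_eq.
  subst S.
  apply: (hmax (copy 0 a b 0 0)); first exact: copy_free.
    by rewrite in_fset0.
  split.
    move=> Q; rewrite !inE => /orP [/eqP ->|//].
    by apply: bnd_sub_board => //; rewrite /bnd /=; lia.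
  by move=> Q Q'; rewrite !inE => /orP [/eqP ->|//] /orP [/eqP ->|//]; rewrite eqxx.
- have /cardfs1P [Q0 ES] : #|` S| == 1%N by rewrite E.
  subst S.
  have [k [c [d [hk EQ]]]] := free_copyE (hfree Q0 (fset11 Q0)).
  subst Q0.
  have hbd := sub_board_bnd hk (hsub _ (fset11 _)).
  have [k' [c' [d' [hk' [hb' hdj]]]]] := lb_wit (ltac:(lia) : 1 <= Posz a) (ltac:(lia) : 1 <= Posz b) hk hbd.
  have hne : copy k' a b c' d' != copy k a b c d.
    apply/eqP => heq.
    have [x [y hxy]] : exists x y, memk k' (Posz a) (Posz b) c' d' x y by apply: memk_some; lia.
    have h1 := (in_copyE k' a b c' d' x y).2 hxy.
    rewrite heq in h1; move/in_copyE: h1 => h1.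
    exact: (hdj x y hxy h1).
  apply: (hmax (copy k' a b c' d')); first exact: copy_free.
    by rewrite inE.
  split.
    move=> Q; rewrite !inE => /orP [/eqP ->|/eqP ->].
      exact: bnd_sub_board.
    exact: bnd_sub_board.
  move=> Q Q'; rewrite !inE => /orP [/eqP ->|/eqP ->] /orP [/eqP ->|/eqP ->];
    rewrite ?eqxx // => _.
    exact: disj_copy.
  by apply: disj_copy; apply: disjk_sym.
Qed.

Lemma min_ex (P : nat -> Prop) m : P m -> exists k, P k /\ forall j, P j -> (k <= j)%N.
Proof.
elim/ltn_ind: m => m IH Pm.
case: (classic (exists j, (j < m)%N /\ P j)) => [[j [hj Pj]]|hn]; first exact: IH j hj Pj.
exists m; split => // j Pj; rewrite leqNgt; apply/negP => hjm; by apply: hn; exists j.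
Qed.
Lemma hit_A_0 (A B c d : int) (r0 : 0 <= (A - 1%:Z)) (r1 : 0 <= (B - 1%:Z)) (r2 : 0 <= (- 2 * A + B + 1%:Z)) (hb : bnd 0 A B c d) :
  exists x y, memk 0 A B c d x y /\ (memk 0 A B (B) (A - 1%:Z) x y \/ memk 3 A B (A - 1%:Z) (A - 1%:Z) x y \/ memk 1 A B (2 * A) (B) x y \/ memk 2 A B (A - 1%:Z) (2 * A) x y).
Proof.
move: hb; rewrite /bnd /= => hb.
have [h1|h1] : (0 <= (A - d - 2%:Z)) \/ ((A - d - 2%:Z) < 0) by lia.
- 
  have [h2|h2] : (0 <= (A - B + c)) \/ ((A - B + c) < 0) by lia.
  - 
    exists (A + c + 1%:Z), (A); split; [unfold memk; simpl; lia | left; unfold memk; simpl; lia].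
  - 
    exists (A + c + 1%:Z), (2 * A); split; [unfold memk; simpl; lia | right; left; unfold memk; simpl; lia].
- 
  have [h3|h3] : (0 <= (A - c - 1%:Z)) \/ ((A - c - 1%:Z) < 0) by lia.
  - 
    exists (A), (d + 1%:Z); split; [unfold memk; simpl; lia | right; left; unfold memk; simpl; lia].
  - 
    have [h4|h4] : (0 <= (A - d - 1%:Z)) \/ ((A - d - 1%:Z) < 0) by lia.
    - 
      have [h5|h5] : (0 <= (- B + c)) \/ ((- B + c) < 0) by lia.
      - 
        exists (c + 1%:Z), (d + 1%:Z); split; [unfold memk; simpl; lia | left; unfold memk; simpl; lia].
      - 
        exists (A + c + 1%:Z), (2 * A); split; [unfold memk; simpl; lia | right; left; unfold memk; simpl; lia].
    - 
      have [h6|h6] : (0 <= (A + B - d - 1%:Z)) \/ ((A + B - d - 1%:Z) < 0) by lia.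
      - 
        exists (A + c + 1%:Z), (A + B + 1%:Z); split; [unfold memk; simpl; lia | right; right; left; unfold memk; simpl; lia].
      - 
        exists (2 * A + B + 1%:Z), (d + 1%:Z); split; [unfold memk; simpl; lia | right; right; left; unfold memk; simpl; lia].
Qed.

Lemma hit_A_1 (A B c d : int) (r0 : 0 <= (A - 1%:Z)) (r1 : 0 <= (B - 1%:Z)) (r2 : 0 <= (- 2 * A + B + 1%:Z)) (hb : bnd 1 A B c d) :
  exists x y, memk 1 A B c d x y /\ (memk 0 A B (B) (A - 1%:Z) x y \/ memk 3 A B (A - 1%:Z) (A - 1%:Z) x y \/ memk 1 A B (2 * A) (B) x y \/ memk 2 A B (A - 1%:Z) (2 * A) x y).
Proof.
move: hb; rewrite /bnd /= => hb.
have [h7|h7] : (0 <= (A - d - 1%:Z)) \/ ((A - d - 1%:Z) < 0) by lia.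
- 
  exists (B + c + 1%:Z), (A); split; [unfold memk; simpl; lia | left; unfold memk; simpl; lia].
- 
  have [h8|h8] : (0 <= (- A + c)) \/ ((- A + c) < 0) by lia.
  - 
    have [h9|h9] : (0 <= (A - c)) \/ ((A - c) < 0) by lia.
    - 
      exists (B + c + 1%:Z), (d + 1%:Z); split; [unfold memk; simpl; lia | left; unfold memk; simpl; lia].
    - 
      have [h10|h10] : (0 <= (B - d - 1%:Z)) \/ ((B - d - 1%:Z) < 0) by lia.
      - 
        exists (A + B + 1%:Z), (A + d + 1%:Z); split; [unfold memk; simpl; lia | left; unfold memk; simpl; lia].
      - 
        exists (2 * A + 1%:Z), (A + d + 1%:Z); split; [unfold memk; simpl; lia | right; right; left; unfold memk; simpl; lia].
  - 
    have [h11|h11] : (0 <= (2 * A - d - 1%:Z)) \/ ((2 * A - d - 1%:Z) < 0) by lia.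
    - 
      exists (B + c + 1%:Z), (2 * A); split; [unfold memk; simpl; lia | right; left; unfold memk; simpl; lia].
    - 
      exists (2 * A), (A + d + 1%:Z); split; [unfold memk; simpl; lia | right; right; right; unfold memk; simpl; lia].
Qed.

Lemma hit_A_2 (A B c d : int) (r0 : 0 <= (A - 1%:Z)) (r1 : 0 <= (B - 1%:Z)) (r2 : 0 <= (- 2 * A + B + 1%:Z)) (hb : bnd 2 A B c d) :
  exists x y, memk 2 A B c d x y /\ (memk 0 A B (B) (A - 1%:Z) x y \/ memk 3 A B (A - 1%:Z) (A - 1%:Z) x y \/ memk 1 A B (2 * A) (B) x y \/ memk 2 A B (A - 1%:Z) (2 * A) x y).
Proof.
move: hb; rewrite /bnd /= => hb.
have [h12|h12] : (0 <= (- B + c)) \/ ((- B + c) < 0) by lia.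
- 
  exists (2 * A + B + 1%:Z), (B + d + 1%:Z); split; [unfold memk; simpl; lia | right; right; left; unfold memk; simpl; lia].
- 
  have [h13|h13] : (0 <= (A - B + c)) \/ ((A - B + c) < 0) by lia.
  - 
    have [h14|h14] : (0 <= (A - d - 1%:Z)) \/ ((A - d - 1%:Z) < 0) by lia.
    - 
      exists (A + B + 1%:Z), (B + d + 1%:Z); split; [unfold memk; simpl; lia | left; unfold memk; simpl; lia].
    - 
      have [h15|h15] : (0 <= (2 * A - d - 1%:Z)) \/ ((2 * A - d - 1%:Z) < 0) by lia.
      - 
        exists (A + c + 1%:Z), (2 * A); split; [unfold memk; simpl; lia | right; left; unfold memk; simpl; lia].
      - 
        have [h16|h16] : (0 <= (- A + c)) \/ ((- A + c) < 0) by lia.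
        - 
          exists (A + c + 1%:Z), (A + B + 1%:Z); split; [unfold memk; simpl; lia | right; right; left; unfold memk; simpl; lia].
        - 
          exists (c + 1%:Z), (B + d + 1%:Z); split; [unfold memk; simpl; lia | right; right; right; unfold memk; simpl; lia].
  - 
    have [h17|h17] : (0 <= (A - c - 1%:Z)) \/ ((A - c - 1%:Z) < 0) by lia.
    - 
      have [h18|h18] : (0 <= (3 * A - B - d - 1%:Z)) \/ ((3 * A - B - d - 1%:Z) < 0) by lia.
      - 
        exists (A), (B + d + 1%:Z); split; [unfold memk; simpl; lia | right; left; unfold memk; simpl; lia].
      - 
        have [h19|h19] : (0 <= (2 * A - d - 1%:Z)) \/ ((2 * A - d - 1%:Z) < 0) by lia.
        - 
          exists (A + c + 1%:Z), (2 * A); split; [unfold memk; simpl; lia | right; left; unfold memk; simpl; lia].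
        - 
          exists (A), (B + d + 1%:Z); split; [unfold memk; simpl; lia | right; right; right; unfold memk; simpl; lia].
    - 
      have [h20|h20] : (0 <= (2 * A - d - 1%:Z)) \/ ((2 * A - d - 1%:Z) < 0) by lia.
      - 
        exists (A + c + 1%:Z), (2 * A); split; [unfold memk; simpl; lia | right; left; unfold memk; simpl; lia].
      - 
        exists (A + c + 1%:Z), (A + B + 1%:Z); split; [unfold memk; simpl; lia | right; right; left; unfold memk; simpl; lia].
Qed.

Lemma hit_A_3 (A B c d : int) (r0 : 0 <= (A - 1%:Z)) (r1 : 0 <= (B - 1%:Z)) (r2 : 0 <= (- 2 * A + B + 1%:Z)) (hb : bnd 3 A B c d) :
  exists x y, memk 3 A B c d x y /\ (memk 0 A B (B) (A - 1%:Z) x y \/ memk 3 A B (A - 1%:Z) (A - 1%:Z) x y \/ memk 1 A B (2 * A) (B) x y \/ memk 2 A B (A - 1%:Z) (2 * A) x y).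
Proof.
move: hb; rewrite /bnd /= => hb.
have [h21|h21] : (0 <= (A - d - 1%:Z)) \/ ((A - d - 1%:Z) < 0) by lia.
- 
  have [h22|h22] : (0 <= (- B + c)) \/ ((- B + c) < 0) by lia.
  - 
    exists (c + 1%:Z), (A); split; [unfold memk; simpl; lia | left; unfold memk; simpl; lia].
  - 
    have [h23|h23] : (0 <= (- A + c)) \/ ((- A + c) < 0) by lia.
    - 
      exists (A + B + 1%:Z), (A + d + 1%:Z); split; [unfold memk; simpl; lia | left; unfold memk; simpl; lia].
    - 
      have [h24|h24] : (0 <= (- A + c + 1%:Z)) \/ ((- A + c + 1%:Z) < 0) by lia.
      - 
        exists (c + 1%:Z), (A); split; [unfold memk; simpl; lia | right; left; unfold memk; simpl; lia].
      - 
        exists (A), (A + d + 1%:Z); split; [unfold memk; simpl; lia | right; left; unfold memk; simpl; lia].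
- 
  have [h25|h25] : (0 <= (- A - B + c)) \/ ((- A - B + c) < 0) by lia.
  - 
    exists (c + 1%:Z), (d + 1%:Z); split; [unfold memk; simpl; lia | left; unfold memk; simpl; lia].
  - 
    have [h26|h26] : (0 <= (2 * A - c - 2%:Z)) \/ ((2 * A - c - 2%:Z) < 0) by lia.
    - 
      exists (2 * A), (A + d + 1%:Z); split; [unfold memk; simpl; lia | right; right; right; unfold memk; simpl; lia].
    - 
      have [h27|h27] : (0 <= (B - d - 1%:Z)) \/ ((B - d - 1%:Z) < 0) by lia.
      - 
        exists (A + B + 1%:Z), (A + d + 1%:Z); split; [unfold memk; simpl; lia | left; unfold memk; simpl; lia].
      - 
        exists (c + 2%:Z), (A + d + 1%:Z); split; [unfold memk; simpl; lia | right; right; left; unfold memk; simpl; lia].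
Qed.

Lemma hit_C_0 (A B c d : int) (r0 : 0 <= (A - 1%:Z)) (r1 : 0 <= (B - 1%:Z)) (r2 : 0 <= (A - B)) (hb : bnd 0 A B c d) :
  exists x y, memk 0 A B c d x y /\ (memk 1 A B (2 * A) (B - 1%:Z) x y \/ memk 0 A B (B - 1%:Z) (B - 1%:Z) x y \/ memk 3 A B (B - 1%:Z) (B) x y \/ memk 2 A B (B) (2 * A) x y).
Proof.
move: hb; rewrite /bnd /= => hb.
have [h28|h28] : (0 <= (B - d - 2%:Z)) \/ ((B - d - 2%:Z) < 0) by lia.
- 
  exists (A + c + 1%:Z), (B); split; [unfold memk; simpl; lia | right; left; unfold memk; simpl; lia].
- 
  have [h29|h29] : (0 <= (- B + c)) \/ ((- B + c) < 0) by lia.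
  - 
    exists (2 * A + B + 1%:Z), (d + 1%:Z); split; [unfold memk; simpl; lia | left; unfold memk; simpl; lia].
  - 
    have [h30|h30] : (0 <= (B - d - 1%:Z)) \/ ((B - d - 1%:Z) < 0) by lia.
    - 
      exists (B), (d + 1%:Z); split; [unfold memk; simpl; lia | right; left; unfold memk; simpl; lia].
    - 
      exists (B), (d + 1%:Z); split; [unfold memk; simpl; lia | right; right; left; unfold memk; simpl; lia].
Qed.

Lemma hit_C_1 (A B c d : int) (r0 : 0 <= (A - 1%:Z)) (r1 : 0 <= (B - 1%:Z)) (r2 : 0 <= (A - B)) (hb : bnd 1 A B c d) :
  exists x y, memk 1 A B c d x y /\ (memk 1 A B (2 * A) (B - 1%:Z) x y \/ memk 0 A B (B - 1%:Z) (B - 1%:Z) x y \/ memk 3 A B (B - 1%:Z) (B) x y \/ memk 2 A B (B) (2 * A) x y).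
Proof.
move: hb; rewrite /bnd /= => hb.
have [h31|h31] : (0 <= (B - c - 1%:Z)) \/ ((B - c - 1%:Z) < 0) by lia.
- 
  exists (B + c + 1%:Z), (A + B + 1%:Z); split; [unfold memk; simpl; lia | right; right; left; unfold memk; simpl; lia].
- 
  have [h32|h32] : (0 <= (- B + d)) \/ ((- B + d) < 0) by lia.
  - 
    exists (B + c + 1%:Z), (2 * A + B + 1%:Z); split; [unfold memk; simpl; lia | right; right; right; unfold memk; simpl; lia].
  - 
    have [h33|h33] : (0 <= (- 2 * A + c)) \/ ((- 2 * A + c) < 0) by lia.
    - 
      exists (B + c + 1%:Z), (B); split; [unfold memk; simpl; lia | left; unfold memk; simpl; lia].
    - 
      exists (B + c + 1%:Z), (B); split; [unfold memk; simpl; lia | right; left; unfold memk; simpl; lia].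
Qed.

Lemma hit_C_2 (A B c d : int) (r0 : 0 <= (A - 1%:Z)) (r1 : 0 <= (B - 1%:Z)) (r2 : 0 <= (A - B)) (hb : bnd 2 A B c d) :
  exists x y, memk 2 A B c d x y /\ (memk 1 A B (2 * A) (B - 1%:Z) x y \/ memk 0 A B (B - 1%:Z) (B - 1%:Z) x y \/ memk 3 A B (B - 1%:Z) (B) x y \/ memk 2 A B (B) (2 * A) x y).
Proof.
move: hb; rewrite /bnd /= => hb.
have [h34|h34] : (0 <= (B - d - 1%:Z)) \/ ((B - d - 1%:Z) < 0) by lia.
- 
  exists (A + B), (B + d + 1%:Z); split; [unfold memk; simpl; lia | right; left; unfold memk; simpl; lia].
- 
  have [h35|h35] : (0 <= (B - c - 1%:Z)) \/ ((B - c - 1%:Z) < 0) by lia.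
  - 
    exists (B), (B + d + 1%:Z); split; [unfold memk; simpl; lia | right; right; left; unfold memk; simpl; lia].
  - 
    have [h36|h36] : (0 <= (2 * A - d - 1%:Z)) \/ ((2 * A - d - 1%:Z) < 0) by lia.
    - 
      exists (2 * A + B + 1%:Z), (B + d + 1%:Z); split; [unfold memk; simpl; lia | left; unfold memk; simpl; lia].
    - 
      exists (c + 1%:Z), (B + d + 1%:Z); split; [unfold memk; simpl; lia | right; right; right; unfold memk; simpl; lia].
Qed.

Lemma hit_C_3 (A B c d : int) (r0 : 0 <= (A - 1%:Z)) (r1 : 0 <= (B - 1%:Z)) (r2 : 0 <= (A - B)) (hb : bnd 3 A B c d) :
  exists x y, memk 3 A B c d x y /\ (memk 1 A B (2 * A) (B - 1%:Z) x y \/ memk 0 A B (B - 1%:Z) (B - 1%:Z) x y \/ memk 3 A B (B - 1%:Z) (B) x y \/ memk 2 A B (B) (2 * A) x y).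
Proof.
move: hb; rewrite /bnd /= => hb.
have [h37|h37] : (0 <= (- 2 * A + c)) \/ ((- 2 * A + c) < 0) by lia.
- 
  exists (c + 1%:Z), (A + B); split; [unfold memk; simpl; lia | left; unfold memk; simpl; lia].
- 
  have [h38|h38] : (0 <= (B - c - 2%:Z)) \/ ((B - c - 2%:Z) < 0) by lia.
  - 
    exists (B), (A + d + 1%:Z); split; [unfold memk; simpl; lia | right; right; left; unfold memk; simpl; lia].
  - 
    have [h39|h39] : (0 <= (B - d - 1%:Z)) \/ ((B - d - 1%:Z) < 0) by lia.
    - 
      exists (c + 1%:Z), (B); split; [unfold memk; simpl; lia | right; left; unfold memk; simpl; lia].
    - 
      have [h40|h40] : (0 <= (B - c - 1%:Z)) \/ ((B - c - 1%:Z) < 0) by lia.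
      - 
        exists (c + 1%:Z), (d + 1%:Z); split; [unfold memk; simpl; lia | right; right; left; unfold memk; simpl; lia].
      - 
        exists (c + 1%:Z), (2 * A + B + 1%:Z); split; [unfold memk; simpl; lia | right; right; right; unfold memk; simpl; lia].
Qed.

Lemma hit_E_0 (A B c d : int) (r0 : 0 <= (A - 1%:Z)) (r1 : 0 <= (- A + B - 2%:Z)) (r2 : 0 <= (2 * A - B - 3%:Z)) (hb : bnd 0 A B c d) :
  exists x y, memk 0 A B c d x y /\ (memk 0 A B (B - 2%:Z) (2 * A - 3%:Z) x y \/ memk 1 A B (2 * A - 1%:Z) (- A + B - 2%:Z) x y \/ memk 3 A B (A - 3%:Z) (- A + B - 1%:Z) x y \/ memk 2 A B (- A + B) (2 * A - 2%:Z) x y).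
Proof.
move: hb; rewrite /bnd /= => hb.
have [h41|h41] : (0 <= (- 2 * A + d + 2%:Z)) \/ ((- 2 * A + d + 2%:Z) < 0) by lia.
- 
  exists (B + 1%:Z), (d + 1%:Z); split; [unfold memk; simpl; lia | right; right; right; unfold memk; simpl; lia].
- 
  have [h42|h42] : (0 <= (- 2 * A + d + 3%:Z)) \/ ((- 2 * A + d + 3%:Z) < 0) by lia.
  - 
    have [h43|h43] : (0 <= (- B + c + 2%:Z)) \/ ((- B + c + 2%:Z) < 0) by lia.
    - 
      exists (c + 1%:Z), (d + 1%:Z); split; [unfold memk; simpl; lia | left; unfold memk; simpl; lia].
    - 
      exists (B - 1%:Z), (d + 1%:Z); split; [unfold memk; simpl; lia | left; unfold memk; simpl; lia].
  - 
    have [h44|h44] : (0 <= (- 2 * A + B + d + 3%:Z)) \/ ((- 2 * A + B + d + 3%:Z) < 0) by lia.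
    - 
      have [h45|h45] : (0 <= (A - B + c + 2%:Z)) \/ ((A - B + c + 2%:Z) < 0) by lia.
      - 
        exists (A + c + 1%:Z), (2 * A - 2%:Z); split; [unfold memk; simpl; lia | left; unfold memk; simpl; lia].
      - 
        have [h46|h46] : (0 <= (A - B + d + 1%:Z)) \/ ((A - B + d + 1%:Z) < 0) by lia.
        - 
          exists (A - 2%:Z), (d + 1%:Z); split; [unfold memk; simpl; lia | right; right; left; unfold memk; simpl; lia].
        - 
          exists (A + c + 1%:Z), (B); split; [unfold memk; simpl; lia | right; right; left; unfold memk; simpl; lia].
    - 
      have [h47|h47] : (0 <= (- A + c + 1%:Z)) \/ ((- A + c + 1%:Z) < 0) by lia.
      - 
        exists (A + c + 1%:Z), (B - 1%:Z); split; [unfold memk; simpl; lia | right; left; unfold memk; simpl; lia].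
      - 
        exists (A + c + 1%:Z), (B); split; [unfold memk; simpl; lia | right; right; left; unfold memk; simpl; lia].
Qed.

Lemma hit_E_1 (A B c d : int) (r0 : 0 <= (A - 1%:Z)) (r1 : 0 <= (- A + B - 2%:Z)) (r2 : 0 <= (2 * A - B - 3%:Z)) (hb : bnd 1 A B c d) :
  exists x y, memk 1 A B c d x y /\ (memk 0 A B (B - 2%:Z) (2 * A - 3%:Z) x y \/ memk 1 A B (2 * A - 1%:Z) (- A + B - 2%:Z) x y \/ memk 3 A B (A - 3%:Z) (- A + B - 1%:Z) x y \/ memk 2 A B (- A + B) (2 * A - 2%:Z) x y).
Proof.
move: hb; rewrite /bnd /= => hb.
have [h48|h48] : (0 <= (2 * A - c - 2%:Z)) \/ ((2 * A - c - 2%:Z) < 0) by lia.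
- 
  exists (B + c + 1%:Z), (2 * A - 2%:Z); split; [unfold memk; simpl; lia | left; unfold memk; simpl; lia].
- 
  have [h49|h49] : (0 <= (- A + d + 2%:Z)) \/ ((- A + d + 2%:Z) < 0) by lia.
  - 
    exists (A + B - 1%:Z), (A + d + 1%:Z); split; [unfold memk; simpl; lia | left; unfold memk; simpl; lia].
  - 
    have [h50|h50] : (0 <= (- A + d + 3%:Z)) \/ ((- A + d + 3%:Z) < 0) by lia.
    - 
      exists (c + 1%:Z), (A + d + 1%:Z); split; [unfold memk; simpl; lia | left; unfold memk; simpl; lia].
    - 
      have [h51|h51] : (0 <= (- 2 * A + c)) \/ ((- 2 * A + c) < 0) by lia.
      - 
        exists (2 * A + B), (A + d + 1%:Z); split; [unfold memk; simpl; lia | right; left; unfold memk; simpl; lia].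
      - 
        have [h52|h52] : (0 <= (A - B + d + 2%:Z)) \/ ((A - B + d + 2%:Z) < 0) by lia.
        - 
          exists (B + c + 1%:Z), (d + 1%:Z); split; [unfold memk; simpl; lia | right; left; unfold memk; simpl; lia].
        - 
          exists (B + c + 1%:Z), (- A + B - 1%:Z); split; [unfold memk; simpl; lia | right; left; unfold memk; simpl; lia].
Qed.

Lemma hit_E_2 (A B c d : int) (r0 : 0 <= (A - 1%:Z)) (r1 : 0 <= (- A + B - 2%:Z)) (r2 : 0 <= (2 * A - B - 3%:Z)) (hb : bnd 2 A B c d) :
  exists x y, memk 2 A B c d x y /\ (memk 0 A B (B - 2%:Z) (2 * A - 3%:Z) x y \/ memk 1 A B (2 * A - 1%:Z) (- A + B - 2%:Z) x y \/ memk 3 A B (A - 3%:Z) (- A + B - 1%:Z) x y \/ memk 2 A B (- A + B) (2 * A - 2%:Z) x y).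
Proof.
move: hb; rewrite /bnd /= => hb.
have [h53|h53] : (0 <= (- 2 * A + d + 1%:Z)) \/ ((- 2 * A + d + 1%:Z) < 0) by lia.
- 
  exists (A + c + 1%:Z), (2 * A + B - 1%:Z); split; [unfold memk; simpl; lia | right; right; right; unfold memk; simpl; lia].
- 
  have [h54|h54] : (0 <= (- B + c + 1%:Z)) \/ ((- B + c + 1%:Z) < 0) by lia.
  - 
    have [h55|h55] : (0 <= (A - d - 2%:Z)) \/ ((A - d - 2%:Z) < 0) by lia.
    - 
      exists (2 * A + B), (B + d + 1%:Z); split; [unfold memk; simpl; lia | right; left; unfold memk; simpl; lia].
    - 
      have [h56|h56] : (0 <= (2 * A - d - 3%:Z)) \/ ((2 * A - d - 3%:Z) < 0) by lia.
      - 
        exists (A + B - 1%:Z), (B + d + 1%:Z); split; [unfold memk; simpl; lia | left; unfold memk; simpl; lia].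
      - 
        exists (c + 1%:Z), (B + d + 1%:Z); split; [unfold memk; simpl; lia | right; right; right; unfold memk; simpl; lia].
  - 
    have [h57|h57] : (0 <= (- 2 * A + B + d + 3%:Z)) \/ ((- 2 * A + B + d + 3%:Z) < 0) by lia.
    - 
      have [h58|h58] : (0 <= (2 * A - B - d - 3%:Z)) \/ ((2 * A - B - d - 3%:Z) < 0) by lia.
      - 
        exists (B - 1%:Z), (B + d + 1%:Z); split; [unfold memk; simpl; lia | left; unfold memk; simpl; lia].
      - 
        have [h59|h59] : (0 <= (2 * A - d - 3%:Z)) \/ ((2 * A - d - 3%:Z) < 0) by lia.
        - 
          exists (B + 1%:Z), (B + d + 1%:Z); split; [unfold memk; simpl; lia | right; right; right; unfold memk; simpl; lia].
        - 
          have [h60|h60] : (0 <= (- B + c + 2%:Z)) \/ ((- B + c + 2%:Z) < 0) by lia.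
          - 
            exists (A + c + 1%:Z), (d + 1%:Z); split; [unfold memk; simpl; lia | left; unfold memk; simpl; lia].
          - 
            have [h61|h61] : (0 <= (A - B + c)) \/ ((A - B + c) < 0) by lia.
            - 
              exists (c + 1%:Z), (B + d + 1%:Z); split; [unfold memk; simpl; lia | right; right; right; unfold memk; simpl; lia].
            - 
              exists (- A + B + 1%:Z), (B + d + 1%:Z); split; [unfold memk; simpl; lia | right; right; right; unfold memk; simpl; lia].
    - 
      have [h62|h62] : (0 <= (- A + c + 1%:Z)) \/ ((- A + c + 1%:Z) < 0) by lia.
      - 
        exists (A + c + 1%:Z), (B - 1%:Z); split; [unfold memk; simpl; lia | right; left; unfold memk; simpl; lia].
      - 
        exists (A + c + 1%:Z), (B); split; [unfold memk; simpl; lia | right; right; left; unfold memk; simpl; lia].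
Qed.

Lemma hit_E_3 (A B c d : int) (r0 : 0 <= (A - 1%:Z)) (r1 : 0 <= (- A + B - 2%:Z)) (r2 : 0 <= (2 * A - B - 3%:Z)) (hb : bnd 3 A B c d) :
  exists x y, memk 3 A B c d x y /\ (memk 0 A B (B - 2%:Z) (2 * A - 3%:Z) x y \/ memk 1 A B (2 * A - 1%:Z) (- A + B - 2%:Z) x y \/ memk 3 A B (A - 3%:Z) (- A + B - 1%:Z) x y \/ memk 2 A B (- A + B) (2 * A - 2%:Z) x y).
Proof.
move: hb; rewrite /bnd /= => hb.
have [h63|h63] : (0 <= (- B + c + 2%:Z)) \/ ((- B + c + 2%:Z) < 0) by lia.
- 
  exists (c + 1%:Z), (2 * A - 2%:Z); split; [unfold memk; simpl; lia | left; unfold memk; simpl; lia].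
- 
  have [h64|h64] : (0 <= (- A + d + 2%:Z)) \/ ((- A + d + 2%:Z) < 0) by lia.
  - 
    exists (B + 1%:Z), (A + d + 1%:Z); split; [unfold memk; simpl; lia | right; right; right; unfold memk; simpl; lia].
  - 
    have [h65|h65] : (0 <= (- A + d + 3%:Z)) \/ ((- A + d + 3%:Z) < 0) by lia.
    - 
      exists (B - 1%:Z), (A + d + 1%:Z); split; [unfold memk; simpl; lia | left; unfold memk; simpl; lia].
    - 
      have [h66|h66] : (0 <= (- A + c + 2%:Z)) \/ ((- A + c + 2%:Z) < 0) by lia.
      - 
        exists (c + 1%:Z), (B); split; [unfold memk; simpl; lia | right; right; left; unfold memk; simpl; lia].
      - 
        have [h67|h67] : (0 <= (A - c - 4%:Z)) \/ ((A - c - 4%:Z) < 0) by lia.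
        - 
          exists (A - 2%:Z), (A + d + 1%:Z); split; [unfold memk; simpl; lia | right; right; left; unfold memk; simpl; lia].
        - 
          have [h68|h68] : (0 <= (A - B + d + 1%:Z)) \/ ((A - B + d + 1%:Z) < 0) by lia.
          - 
            exists (c + 1%:Z), (d + 1%:Z); split; [unfold memk; simpl; lia | right; right; left; unfold memk; simpl; lia].
          - 
            exists (c + 1%:Z), (- A + B); split; [unfold memk; simpl; lia | right; right; left; unfold memk; simpl; lia].
Qed.

Lemma hit_F_0 (A B c d : int) (r0 : 0 <= (A - 3%:Z)) (r1 : 0 <= (- A + B - 1%:Z)) (r2 : 0 <= (A - B + 1%:Z)) (hb : bnd 0 A B c d) :
  exists x y, memk 0 A B c d x y /\ (memk 0 A B (B - 3%:Z) (B - 3%:Z) x y \/ memk 0 A B (- A + B - 1%:Z) (A + B - 1%:Z) x y \/ memk 1 A B (A + B - 3%:Z) (B) x y \/ memk 1 A B (A + B - 2%:Z) (- A + B - 1%:Z) x y).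
Proof.
move: hb; rewrite /bnd /= => hb.
have [h69|h69] : (0 <= (B - d - 4%:Z)) \/ ((B - d - 4%:Z) < 0) by lia.
- 
  exists (A + c + 1%:Z), (B - 2%:Z); split; [unfold memk; simpl; lia | left; unfold memk; simpl; lia].
- 
  have [h70|h70] : (0 <= (- A - B + d + 1%:Z)) \/ ((- A - B + d + 1%:Z) < 0) by lia.
  - 
    exists (c + 1%:Z), (d + 1%:Z); split; [unfold memk; simpl; lia | right; left; unfold memk; simpl; lia].
  - 
    have [h71|h71] : (0 <= (- B + d + 2%:Z)) \/ ((- B + d + 2%:Z) < 0) by lia.
    - 
      exists (A + B - 2%:Z), (d + 1%:Z); split; [unfold memk; simpl; lia | left; unfold memk; simpl; lia].
    - 
      have [h72|h72] : (0 <= (- B + c + 3%:Z)) \/ ((- B + c + 3%:Z) < 0) by lia.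
      - 
        exists (c + 1%:Z), (d + 1%:Z); split; [unfold memk; simpl; lia | left; unfold memk; simpl; lia].
      - 
        exists (B - 2%:Z), (d + 1%:Z); split; [unfold memk; simpl; lia | left; unfold memk; simpl; lia].
Qed.

Lemma hit_F_1 (A B c d : int) (r0 : 0 <= (A - 3%:Z)) (r1 : 0 <= (- A + B - 1%:Z)) (r2 : 0 <= (A - B + 1%:Z)) (hb : bnd 1 A B c d) :
  exists x y, memk 1 A B c d x y /\ (memk 0 A B (B - 3%:Z) (B - 3%:Z) x y \/ memk 0 A B (- A + B - 1%:Z) (A + B - 1%:Z) x y \/ memk 1 A B (A + B - 3%:Z) (B) x y \/ memk 1 A B (A + B - 2%:Z) (- A + B - 1%:Z) x y).
Proof.
move: hb; rewrite /bnd /= => hb.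
have [h73|h73] : (0 <= (A - c - 1%:Z)) \/ ((A - c - 1%:Z) < 0) by lia.
- 
  exists (B + c + 1%:Z), (A + B); split; [unfold memk; simpl; lia | right; left; unfold memk; simpl; lia].
- 
  have [h74|h74] : (0 <= (B - d - 3%:Z)) \/ ((B - d - 3%:Z) < 0) by lia.
  - 
    have [h75|h75] : (0 <= (2 * A - c - 3%:Z)) \/ ((2 * A - c - 3%:Z) < 0) by lia.
    - 
      exists (B + c + 1%:Z), (B - 2%:Z); split; [unfold memk; simpl; lia | left; unfold memk; simpl; lia].
    - 
      have [h76|h76] : (0 <= (A + B - c - 3%:Z)) \/ ((A + B - c - 3%:Z) < 0) by lia.
      - 
        exists (A + B - 2%:Z), (A + d + 1%:Z); split; [unfold memk; simpl; lia | left; unfold memk; simpl; lia].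
      - 
        have [h77|h77] : (0 <= (A - B + d)) \/ ((A - B + d) < 0) by lia.
        - 
          exists (A + 2 * B - 2%:Z), (A + d + 1%:Z); split; [unfold memk; simpl; lia | right; right; left; unfold memk; simpl; lia].
        - 
          exists (c + 1%:Z), (A + d + 1%:Z); split; [unfold memk; simpl; lia | right; right; right; unfold memk; simpl; lia].
  - 
    have [h78|h78] : (0 <= (A + B - c - 4%:Z)) \/ ((A + B - c - 4%:Z) < 0) by lia.
    - 
      exists (B + c + 1%:Z), (A + B + 1%:Z); split; [unfold memk; simpl; lia | right; right; left; unfold memk; simpl; lia].
    - 
      have [h79|h79] : (0 <= (A + B - c - 3%:Z)) \/ ((A + B - c - 3%:Z) < 0) by lia.
      - 
        exists (B + c + 1%:Z), (B + 1%:Z); split; [unfold memk; simpl; lia | right; right; left; unfold memk; simpl; lia].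
      - 
        exists (A + 2 * B - 2%:Z), (A + d + 1%:Z); split; [unfold memk; simpl; lia | right; right; left; unfold memk; simpl; lia].
Qed.

Lemma hit_F_2 (A B c d : int) (r0 : 0 <= (A - 3%:Z)) (r1 : 0 <= (- A + B - 1%:Z)) (r2 : 0 <= (A - B + 1%:Z)) (hb : bnd 2 A B c d) :
  exists x y, memk 2 A B c d x y /\ (memk 0 A B (B - 3%:Z) (B - 3%:Z) x y \/ memk 0 A B (- A + B - 1%:Z) (A + B - 1%:Z) x y \/ memk 1 A B (A + B - 3%:Z) (B) x y \/ memk 1 A B (A + B - 2%:Z) (- A + B - 1%:Z) x y).
Proof.
move: hb; rewrite /bnd /= => hb.
have [h80|h80] : (0 <= (B - d - 3%:Z)) \/ ((B - d - 3%:Z) < 0) by lia.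
- 
  exists (A + B - 2%:Z), (B + d + 1%:Z); split; [unfold memk; simpl; lia | left; unfold memk; simpl; lia].
- 
  have [h81|h81] : (0 <= (A - d - 1%:Z)) \/ ((A - d - 1%:Z) < 0) by lia.
  - 
    exists (c + 1%:Z), (B + d + 1%:Z); split; [unfold memk; simpl; lia | right; left; unfold memk; simpl; lia].
  - 
    have [h82|h82] : (0 <= (B - c - 1%:Z)) \/ ((B - c - 1%:Z) < 0) by lia.
    - 
      exists (B), (B + d + 1%:Z); split; [unfold memk; simpl; lia | right; left; unfold memk; simpl; lia].
    - 
      exists (A + 2 * B - 2%:Z), (B + d + 1%:Z); split; [unfold memk; simpl; lia | right; right; left; unfold memk; simpl; lia].
Qed.

Lemma hit_F_3 (A B c d : int) (r0 : 0 <= (A - 3%:Z)) (r1 : 0 <= (- A + B - 1%:Z)) (r2 : 0 <= (A - B + 1%:Z)) (hb : bnd 3 A B c d) :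
  exists x y, memk 3 A B c d x y /\ (memk 0 A B (B - 3%:Z) (B - 3%:Z) x y \/ memk 0 A B (- A + B - 1%:Z) (A + B - 1%:Z) x y \/ memk 1 A B (A + B - 3%:Z) (B) x y \/ memk 1 A B (A + B - 2%:Z) (- A + B - 1%:Z) x y).
Proof.
move: hb; rewrite /bnd /= => hb.
exists (c + 1%:Z), (A + B); split; [unfold memk; simpl; lia | right; left; unfold memk; simpl; lia].
Qed.

Lemma hit_G_0 (A B c d : int) (r0 : 0 <= (A - 4%:Z)) (r1 : 0 <= (- 2 * A + B + 2%:Z)) (r2 : 0 <= (2 * A - B - 2%:Z)) (hb : bnd 0 A B c d) :
  exists x y, memk 0 A B c d x y /\ (memk 0 A B (B - 3%:Z) (A - 3%:Z) x y \/ memk 1 A B (2 * A - 3%:Z) (B - 2%:Z) x y \/ memk 3 A B (- A + B - 2%:Z) (A - 3%:Z) x y \/ memk 2 A B (- A + B - 2%:Z) (2 * A - 2%:Z) x y).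
Proof.
move: hb; rewrite /bnd /= => hb.
have [h83|h83] : (0 <= (A - d - 4%:Z)) \/ ((A - d - 4%:Z) < 0) by lia.
- 
  have [h84|h84] : (0 <= (A - B + c + 3%:Z)) \/ ((A - B + c + 3%:Z) < 0) by lia.
  - 
    exists (A + c + 1%:Z), (A - 2%:Z); split; [unfold memk; simpl; lia | left; unfold memk; simpl; lia].
  - 
    exists (A + c + 1%:Z), (2 * A - 2%:Z); split; [unfold memk; simpl; lia | right; right; left; unfold memk; simpl; lia].
- 
  have [h85|h85] : (0 <= (- A + B - c - 2%:Z)) \/ ((- A + B - c - 2%:Z) < 0) by lia.
  - 
    exists (- A + B - 1%:Z), (d + 1%:Z); split; [unfold memk; simpl; lia | right; right; left; unfold memk; simpl; lia].
  - 
    have [h86|h86] : (0 <= (A - d - 3%:Z)) \/ ((A - d - 3%:Z) < 0) by lia.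
    - 
      have [h87|h87] : (0 <= (- B + c + 3%:Z)) \/ ((- B + c + 3%:Z) < 0) by lia.
      - 
        exists (c + 1%:Z), (d + 1%:Z); split; [unfold memk; simpl; lia | left; unfold memk; simpl; lia].
      - 
        exists (B - 2%:Z), (d + 1%:Z); split; [unfold memk; simpl; lia | left; unfold memk; simpl; lia].
    - 
      have [h88|h88] : (0 <= (A + B - d - 3%:Z)) \/ ((A + B - d - 3%:Z) < 0) by lia.
      - 
        exists (A + B - 2%:Z), (d + 1%:Z); split; [unfold memk; simpl; lia | left; unfold memk; simpl; lia].
      - 
        have [h89|h89] : (0 <= (- B + c + 3%:Z)) \/ ((- B + c + 3%:Z) < 0) by lia.
        - 
          exists (2 * A + B - 2%:Z), (d + 1%:Z); split; [unfold memk; simpl; lia | right; left; unfold memk; simpl; lia].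
        - 
          exists (2 * A - 2%:Z), (d + 1%:Z); split; [unfold memk; simpl; lia | right; left; unfold memk; simpl; lia].
Qed.

Lemma hit_G_1 (A B c d : int) (r0 : 0 <= (A - 4%:Z)) (r1 : 0 <= (- 2 * A + B + 2%:Z)) (r2 : 0 <= (2 * A - B - 2%:Z)) (hb : bnd 1 A B c d) :
  exists x y, memk 1 A B c d x y /\ (memk 0 A B (B - 3%:Z) (A - 3%:Z) x y \/ memk 1 A B (2 * A - 3%:Z) (B - 2%:Z) x y \/ memk 3 A B (- A + B - 2%:Z) (A - 3%:Z) x y \/ memk 2 A B (- A + B - 2%:Z) (2 * A - 2%:Z) x y).
Proof.
move: hb; rewrite /bnd /= => hb.
have [h90|h90] : (0 <= (A - d - 3%:Z)) \/ ((A - d - 3%:Z) < 0) by lia.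
- 
  have [h91|h91] : (0 <= (2 * A - c - 3%:Z)) \/ ((2 * A - c - 3%:Z) < 0) by lia.
  - 
    exists (B + c + 1%:Z), (A - 2%:Z); split; [unfold memk; simpl; lia | left; unfold memk; simpl; lia].
  - 
    have [h92|h92] : (0 <= (A + B - c - 3%:Z)) \/ ((A + B - c - 3%:Z) < 0) by lia.
    - 
      exists (A + B - 2%:Z), (A + d + 1%:Z); split; [unfold memk; simpl; lia | left; unfold memk; simpl; lia].
    - 
      exists (2 * A + B - 2%:Z), (A + d + 1%:Z); split; [unfold memk; simpl; lia | right; left; unfold memk; simpl; lia].
- 
  have [h93|h93] : (0 <= (2 * A - c - 4%:Z)) \/ ((2 * A - c - 4%:Z) < 0) by lia.
  - 
    exists (B + c + 1%:Z), (A + B - 1%:Z); split; [unfold memk; simpl; lia | right; left; unfold memk; simpl; lia].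
  - 
    have [h94|h94] : (0 <= (- 2 * A + c + 2%:Z)) \/ ((- 2 * A + c + 2%:Z) < 0) by lia.
    - 
      exists (2 * A + B - 2%:Z), (A + d + 1%:Z); split; [unfold memk; simpl; lia | right; left; unfold memk; simpl; lia].
    - 
      have [h95|h95] : (0 <= (B - d - 3%:Z)) \/ ((B - d - 3%:Z) < 0) by lia.
      - 
        exists (A + B - 2%:Z), (A + d + 1%:Z); split; [unfold memk; simpl; lia | left; unfold memk; simpl; lia].
      - 
        exists (B + c + 1%:Z), (d + 1%:Z); split; [unfold memk; simpl; lia | right; left; unfold memk; simpl; lia].
Qed.

Lemma hit_G_2 (A B c d : int) (r0 : 0 <= (A - 4%:Z)) (r1 : 0 <= (- 2 * A + B + 2%:Z)) (r2 : 0 <= (2 * A - B - 2%:Z)) (hb : bnd 2 A B c d) :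
  exists x y, memk 2 A B c d x y /\ (memk 0 A B (B - 3%:Z) (A - 3%:Z) x y \/ memk 1 A B (2 * A - 3%:Z) (B - 2%:Z) x y \/ memk 3 A B (- A + B - 2%:Z) (A - 3%:Z) x y \/ memk 2 A B (- A + B - 2%:Z) (2 * A - 2%:Z) x y).
Proof.
move: hb; rewrite /bnd /= => hb.
have [h96|h96] : (0 <= (A - B + c + 3%:Z)) \/ ((A - B + c + 3%:Z) < 0) by lia.
- 
  have [h97|h97] : (0 <= (A - d - 3%:Z)) \/ ((A - d - 3%:Z) < 0) by lia.
  - 
    exists (A + B - 2%:Z), (B + d + 1%:Z); split; [unfold memk; simpl; lia | left; unfold memk; simpl; lia].
  - 
    have [h98|h98] : (0 <= (- B + c + 3%:Z)) \/ ((- B + c + 3%:Z) < 0) by lia.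
    - 
      have [h99|h99] : (0 <= (2 * A - d - 2%:Z)) \/ ((2 * A - d - 2%:Z) < 0) by lia.
      - 
        exists (2 * A + B - 2%:Z), (B + d + 1%:Z); split; [unfold memk; simpl; lia | right; left; unfold memk; simpl; lia].
      - 
        exists (A + c + 1%:Z), (A + B - 1%:Z); split; [unfold memk; simpl; lia | right; left; unfold memk; simpl; lia].
    - 
      have [h100|h100] : (0 <= (A - d - 2%:Z)) \/ ((A - d - 2%:Z) < 0) by lia.
      - 
        exists (2 * A - 2%:Z), (B + d + 1%:Z); split; [unfold memk; simpl; lia | right; left; unfold memk; simpl; lia].
      - 
        have [h101|h101] : (0 <= (- A + c + 3%:Z)) \/ ((- A + c + 3%:Z) < 0) by lia.
        - 
          exists (A + c + 1%:Z), (A + B - 1%:Z); split; [unfold memk; simpl; lia | right; left; unfold memk; simpl; lia].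
        - 
          have [h102|h102] : (0 <= (3 * A - B - d - 3%:Z)) \/ ((3 * A - B - d - 3%:Z) < 0) by lia.
          - 
            exists (- A + B - 1%:Z), (B + d + 1%:Z); split; [unfold memk; simpl; lia | right; right; left; unfold memk; simpl; lia].
          - 
            have [h103|h103] : (0 <= (2 * A - d - 3%:Z)) \/ ((2 * A - d - 3%:Z) < 0) by lia.
            - 
              exists (A + c + 1%:Z), (2 * A - 2%:Z); split; [unfold memk; simpl; lia | right; right; left; unfold memk; simpl; lia].
            - 
              have [h104|h104] : (0 <= (2 * A - d - 2%:Z)) \/ ((2 * A - d - 2%:Z) < 0) by lia.
              - 
                exists (- A + B - 1%:Z), (B + d + 1%:Z); split; [unfold memk; simpl; lia | right; right; right; unfold memk; simpl; lia].
              - 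
                exists (A + c + 1%:Z), (2 * A + B - 1%:Z); split; [unfold memk; simpl; lia | right; right; right; unfold memk; simpl; lia].
- 
  have [h105|h105] : (0 <= (3 * A - B - d - 3%:Z)) \/ ((3 * A - B - d - 3%:Z) < 0) by lia.
  - 
    exists (- A + B - 1%:Z), (B + d + 1%:Z); split; [unfold memk; simpl; lia | right; right; left; unfold memk; simpl; lia].
  - 
    have [h106|h106] : (0 <= (2 * A - d - 3%:Z)) \/ ((2 * A - d - 3%:Z) < 0) by lia.
    - 
      exists (A + c + 1%:Z), (2 * A - 2%:Z); split; [unfold memk; simpl; lia | right; right; left; unfold memk; simpl; lia].
    - 
      have [h107|h107] : (0 <= (2 * A - d - 2%:Z)) \/ ((2 * A - d - 2%:Z) < 0) by lia.
      - 
        exists (- A + B - 1%:Z), (B + d + 1%:Z); split; [unfold memk; simpl; lia | right; right; right; unfold memk; simpl; lia].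
      - 
        exists (A + c + 1%:Z), (2 * A + B - 1%:Z); split; [unfold memk; simpl; lia | right; right; right; unfold memk; simpl; lia].
Qed.

Lemma hit_G_3 (A B c d : int) (r0 : 0 <= (A - 4%:Z)) (r1 : 0 <= (- 2 * A + B + 2%:Z)) (r2 : 0 <= (2 * A - B - 2%:Z)) (hb : bnd 3 A B c d) :
  exists x y, memk 3 A B c d x y /\ (memk 0 A B (B - 3%:Z) (A - 3%:Z) x y \/ memk 1 A B (2 * A - 3%:Z) (B - 2%:Z) x y \/ memk 3 A B (- A + B - 2%:Z) (A - 3%:Z) x y \/ memk 2 A B (- A + B - 2%:Z) (2 * A - 2%:Z) x y).
Proof.
move: hb; rewrite /bnd /= => hb.
have [h108|h108] : (0 <= (A - d - 3%:Z)) \/ ((A - d - 3%:Z) < 0) by lia.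
- 
  have [h109|h109] : (0 <= (- B + c + 3%:Z)) \/ ((- B + c + 3%:Z) < 0) by lia.
  - 
    exists (c + 1%:Z), (A - 2%:Z); split; [unfold memk; simpl; lia | left; unfold memk; simpl; lia].
  - 
    have [h110|h110] : (0 <= (- A + c + 3%:Z)) \/ ((- A + c + 3%:Z) < 0) by lia.
    - 
      exists (A + B - 2%:Z), (A + d + 1%:Z); split; [unfold memk; simpl; lia | left; unfold memk; simpl; lia].
    - 
      have [h111|h111] : (0 <= (A - B + c + 2%:Z)) \/ ((A - B + c + 2%:Z) < 0) by lia.
      - 
        exists (c + 1%:Z), (A - 2%:Z); split; [unfold memk; simpl; lia | right; right; left; unfold memk; simpl; lia].
      - 
        exists (- A + B - 1%:Z), (A + d + 1%:Z); split; [unfold memk; simpl; lia | right; right; left; unfold memk; simpl; lia].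
- 
  have [h112|h112] : (0 <= (- 2 * A + c + 3%:Z)) \/ ((- 2 * A + c + 3%:Z) < 0) by lia.
  - 
    exists (c + 1%:Z), (A + B - 1%:Z); split; [unfold memk; simpl; lia | right; left; unfold memk; simpl; lia].
  - 
    have [h113|h113] : (0 <= (- B + c + 2%:Z)) \/ ((- B + c + 2%:Z) < 0) by lia.
    - 
      exists (c + 1%:Z), (2 * A - 1%:Z); split; [unfold memk; simpl; lia | right; right; right; unfold memk; simpl; lia].
    - 
      exists (B - 1%:Z), (A + d + 1%:Z); split; [unfold memk; simpl; lia | right; right; right; unfold memk; simpl; lia].
Qed.
Lemma fam_A (a b : nat) (r0 : 0 <= ((Posz a) - 1%:Z)) (r1 : 0 <= ((Posz b) - 1%:Z)) (r2 : 0 <= (- 2 * (Posz a) + (Posz b) + 1%:Z)) :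
  exists S, free_packing_T a b S /\ (#|` S| <= 4)%N.
Proof.
apply: (@packing_of a b 0 ((Posz b)) ((Posz a) - 1%:Z) 3 ((Posz a) - 1%:Z) ((Posz a) - 1%:Z) 1 (2 * (Posz a)) ((Posz b)) 2 ((Posz a) - 1%:Z) (2 * (Posz a))).
all: try done.
all: try (rewrite /bnd /=; lia).
all: try (move=> x y; rewrite /memk /=; lia).
move=> k c d hk hb; case: k hk hb => [|[|[|[|k]]]] // _ hb.
- by apply: hit_A_0.
- by apply: hit_A_1.
- by apply: hit_A_2.
- by apply: hit_A_3.
Qed.

Lemma fam_C (a b : nat) (r0 : 0 <= ((Posz a) - 1%:Z)) (r1 : 0 <= ((Posz b) - 1%:Z)) (r2 : 0 <= ((Posz a) - (Posz b))) :
  exists S, free_packing_T a b S /\ (#|` S| <= 4)%N.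
Proof.
apply: (@packing_of a b 1 (2 * (Posz a)) ((Posz b) - 1%:Z) 0 ((Posz b) - 1%:Z) ((Posz b) - 1%:Z) 3 ((Posz b) - 1%:Z) ((Posz b)) 2 ((Posz b)) (2 * (Posz a))).
all: try done.
all: try (rewrite /bnd /=; lia).
all: try (move=> x y; rewrite /memk /=; lia).
move=> k c d hk hb; case: k hk hb => [|[|[|[|k]]]] // _ hb.
- by apply: hit_C_0.
- by apply: hit_C_1.
- by apply: hit_C_2.
- by apply: hit_C_3.
Qed.

Lemma fam_E (a b : nat) (r0 : 0 <= ((Posz a) - 1%:Z)) (r1 : 0 <= (- (Posz a) + (Posz b) - 2%:Z)) (r2 : 0 <= (2 * (Posz a) - (Posz b) - 3%:Z)) :
  exists S, free_packing_T a b S /\ (#|` S| <= 4)%N.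
Proof.
apply: (@packing_of a b 0 ((Posz b) - 2%:Z) (2 * (Posz a) - 3%:Z) 1 (2 * (Posz a) - 1%:Z) (- (Posz a) + (Posz b) - 2%:Z) 3 ((Posz a) - 3%:Z) (- (Posz a) + (Posz b) - 1%:Z) 2 (- (Posz a) + (Posz b)) (2 * (Posz a) - 2%:Z)).
all: try done.
all: try (rewrite /bnd /=; lia).
all: try (move=> x y; rewrite /memk /=; lia).
move=> k c d hk hb; case: k hk hb => [|[|[|[|k]]]] // _ hb.
- by apply: hit_E_0.
- by apply: hit_E_1.
- by apply: hit_E_2.
- by apply: hit_E_3.
Qed.

Lemma fam_F (a b : nat) (r0 : 0 <= ((Posz a) - 3%:Z)) (r1 : 0 <= (- (Posz a) + (Posz b) - 1%:Z)) (r2 : 0 <= ((Posz a) - (Posz b) + 1%:Z)) :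
  exists S, free_packing_T a b S /\ (#|` S| <= 4)%N.
Proof.
apply: (@packing_of a b 0 ((Posz b) - 3%:Z) ((Posz b) - 3%:Z) 0 (- (Posz a) + (Posz b) - 1%:Z) ((Posz a) + (Posz b) - 1%:Z) 1 ((Posz a) + (Posz b) - 3%:Z) ((Posz b)) 1 ((Posz a) + (Posz b) - 2%:Z) (- (Posz a) + (Posz b) - 1%:Z)).
all: try done.
all: try (rewrite /bnd /=; lia).
all: try (move=> x y; rewrite /memk /=; lia).
move=> k c d hk hb; case: k hk hb => [|[|[|[|k]]]] // _ hb.
- by apply: hit_F_0.
- by apply: hit_F_1.
- by apply: hit_F_2.
- by apply: hit_F_3.
Qed.

Lemma fam_G (a b : nat) (r0 : 0 <= ((Posz a) - 4%:Z)) (r1 : 0 <= (- 2 * (Posz a) + (Posz b) + 2%:Z)) (r2 : 0 <= (2 * (Posz a) - (Posz b) - 2%:Z)) :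
  exists S, free_packing_T a b S /\ (#|` S| <= 4)%N.
Proof.
apply: (@packing_of a b 0 ((Posz b) - 3%:Z) ((Posz a) - 3%:Z) 1 (2 * (Posz a) - 3%:Z) ((Posz b) - 2%:Z) 3 (- (Posz a) + (Posz b) - 2%:Z) ((Posz a) - 3%:Z) 2 (- (Posz a) + (Posz b) - 2%:Z) (2 * (Posz a) - 2%:Z)).
all: try done.
all: try (rewrite /bnd /=; lia).
all: try (move=> x y; rewrite /memk /=; lia).
move=> k c d hk hb; case: k hk hb => [|[|[|[|k]]]] // _ hb.
- by apply: hit_G_0.
- by apply: hit_G_1.
- by apply: hit_G_2.
- by apply: hit_G_3.
Qed.

Lemma some_packing a b : (0 < a)%N -> (0 < b)%N ->
  exists S, free_packing_T a b S /\ (#|` S| <= 4)%N.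
Proof.
move=> ha hb.
have [h|h] : (2 * a <= b + 1)%N \/ (b + 2 <= 2 * a)%N by lia.
  by apply: fam_A; lia.
have [h1|h1] : (b <= a)%N \/ (a + 1 <= b)%N by lia.
  by apply: fam_C; lia.
have [h2|h2] : b = (a + 1)%N \/ (a + 2 <= b)%N by lia.
  by apply: fam_F; lia.
have [h3|h3] : b = (2 * a - 2)%N \/ (b + 3 <= 2 * a)%N by lia.
  by apply: fam_G; lia.
by apply: fam_E; lia.
Qed.

Theorem theorem9 (a b : nat) (ha : (0 < a)%N) (hb : (0 < b)%N) :
  exists k : nat, is_cp_free_T a b k /\ (2 <= k <= 4)%N.
Proof.
have [S0 [hS0 hsz]] := some_packing ha hb.
have [k [[S [hS hk]] hmin]] :=
  @min_ex (fun k => exists S, free_packing_T a b S /\ #|` S| = k) #|` S0|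
     (ex_intro _ S0 (conj hS0 erefl)).
exists k; split.
  split; first by exists S.
  by move=> S' hS'; apply: hmin; exists S'.
apply/andP; split; first by rewrite -hk; exact: lower hS.
by apply: leq_trans (hmin _ _) hsz; exists S0.
Qed.
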